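(* Let $q$ be a prime power and let $C_1=[n,k_1,d_1]_q$ and $C_2=[n,k_2,d_2]_q$ be linear codes over $\mathbb{F}_q$ with $C_2\subset C_1$ (giving, via the CSS construction, an AQECC $[[n,k,d_z/d_x]]_q$ with $k=k_1-k_2$). Let $C_2^{e}$ be the extended code of $C_2$ and $(d_2^{e})^{\perp}$ the minimum distance of its Euclidean dual $(C_2^{e})^{\perp}$. Then: (a) if $(d_1)_{even}\leq (d_1)_{odd}$, there exists an AQECC $[[n+1,k,d_z^{e}/d_x^{e}]]_q$ with $d_z^{e}\geq d_1$ and $d_x^{e}\geq (d_2^{e})^{\perp}$; (b) if $(d_1)_{odd}<(d_1)_{even}$, there exists an AQECC $[[n+1,k,d_z^{e}/d_x^{e}]]_q$ with $d_z^{e}\geq d_1+1$ and $d_x^{e}\geq (d_2^{e})^{\perp}$.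
   Context: An AQECC $[[n,k,d_z/d_x]]_q$ is a $q^k$-dimensional subspace of $\mathbb{C}^{q^n}$ correcting all qudit-flip errors up to $\lfloor (d_x-1)/2\rfloor$ and all phase-shift errors up to $\lfloor (d_z-1)/2\rfloor$. CSS construction: if $C_2\subset C_1\subseteq\mathbb{F}_q^n$ are linear of dimensions $k_2<k_1$, there is an AQECC $[[n,k_1-k_2,d_z/d_x]]_q$ with $d_z=\mathrm{wt}(C_1\setminus C_2)$, $d_x=\mathrm{wt}(C_2^{\perp}\setminus C_1^{\perp})$. The extended code of a linear code $C\subseteq\mathbb{F}_q^n$ is $C^{e}=\{(x_1,\dots,x_{n+1}): (x_1,\dots,x_n)\in C,\ x_1+\cdots+x_{n+1}=0\}$. A vector is even-like if its coordinates sum to $0$ and odd-like otherwise; for a code $C$ with minimum distance $d$, $(d)_{even}$ (resp. $(d)_{odd}$) denotes the minimum weight of the nonzero even-like (resp. odd-like) codewords of $C$. *)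

(* Defs.v *)
From HB Require Import structures.
From mathcomp Require Import all_boot all_order all_algebra.
Set Implicit Arguments. Unset Strict Implicit. Unset Printing Implicit Defensive.
Import GRing.Theory.
Local Open Scope ring_scope.

(* Linear codes of length n over the finite field F (q = #|F|) are
   F-subspaces of the row space 'rV[F]_n. *)
Section Codes.
Variable F : finFieldType.

Definition wt n (v : 'rV[F]_n) : nat := #|[set i : 'I_n | v 0 i != 0]|.

(* Sum of coordinates; a vector is even-like iff coordsum v = 0. *)
Definition coordsum n (v : 'rV[F]_n) : F := \sum_(i < n) v 0 i.

(* Minimum weight of the vectors of the set A satisfying P; n.+1 (which is
   larger than any weight, i.e. plays the role of +infinity) if there is
   no such vector. *)
Definition minwt n (P : pred 'rV[F]_n) : nat :=
  \big[minn/n.+1]_(v : 'rV[F]_n | P v) wt v.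

Definition wt_diff n (A B : {vspace 'rV[F]_n}) : nat :=
  minwt (fun v => (v \in A) && (v \notin B)).

Definition mindist n (C : {vspace 'rV[F]_n}) : nat :=
  minwt (fun v => (v \in C) && (v != 0)).

Definition mindist_even n (C : {vspace 'rV[F]_n}) : nat :=
  minwt (fun v => [&& v \in C, v != 0 & coordsum v == 0]).
Definition mindist_odd n (C : {vspace 'rV[F]_n}) : nat :=
  minwt (fun v => (v \in C) && (coordsum v != 0)).

Definition dual n (C : {vspace 'rV[F]_n}) : {vspace 'rV[F]_n} :=
  <<[seq v : 'rV[F]_n <- enum [set: 'rV[F]_n] |
      [forall c : 'rV[F]_n, (c \in C) ==> (v *m c^T == 0%R)]]>>%VS.

Definition punct n (v : 'rV[F]_n.+1) : 'rV[F]_n :=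
  \row_(i < n) v 0 (widen_ord (leqnSn n) i).

Definition extend n (C : {vspace 'rV[F]_n}) : {vspace 'rV[F]_n.+1} :=
  <<[seq v <- enum [set: 'rV[F]_n.+1] |
      (punct v \in C) && (coordsum v == 0%R)]>>%VS.

(* CSS construction: the AQECC [[m, k, dz/dx]]_q obtained from a pair of
   linear codes D2 \subset D1 of length m, dim D1 - dim D2 = k,
   dz = wt(D1 \ D2), dx = wt(D2^perp \ D1^perp). *)
Definition css_aqecc m (k dz dx : nat) : Prop :=
  exists (D1 D2 : {vspace 'rV[F]_m}),
    [/\ (D2 <= D1)%VS, (\dim D2 < \dim D1)%N, (\dim D1 - \dim D2)%N = k,
        dz = wt_diff D1 D2 & dx = wt_diff (dual D2) (dual D1)].

End Codes.

(* Main.v *)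
Require Import Defs.
From mathcomp Require Import all_boot all_order all_algebra.
Set Implicit Arguments. Unset Strict Implicit. Unset Printing Implicit Defensive.
Import GRing.Theory.
Local Open Scope ring_scope.

Section S.
Variable F : finFieldType.

Lemma minwt_geq n (P : pred 'rV[F]_n) m :
  (forall v, P v -> (m <= wt v)%N) -> (m <= n.+1)%N -> (m <= minwt P)%N.
Proof.
move=> H Hm; rewrite /minwt; apply: (big_ind (fun x => m <= x)%N) => //.
  by move=> x y hx hy; rewrite leq_min hx hy.
Qed.

Lemma wt_le n (v : 'rV[F]_n) : (wt v <= n)%N.
Proof. by rewrite /wt -[X in (_ <= X)%N]card_ord max_card. Qed.

Lemma minwt_le_def n (P : pred 'rV[F]_n) : (minwt P <= n.+1)%N.
Proof.
rewrite /minwt; apply: (big_ind (fun x => x <= n.+1)%N) => //.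
  by move=> x y hx _; rewrite geq_min hx.
by move=> v _; apply: leq_trans (wt_le v) _.
Qed.

Lemma minwt_leq n (P : pred 'rV[F]_n) v : P v -> (minwt P <= wt v)%N.
Proof.
move=> Pv; rewrite /minwt -big_filter.
have : v \in [seq x <- index_enum 'rV[F]_n | P x].
  by rewrite mem_filter Pv /index_enum -enumT mem_enum.
elim: [seq _ <- _ | _] => // a s IH; rewrite inE big_cons => /orP [/eqP <-|/IH h].
  by rewrite geq_minl.
by rewrite geq_min h orbT.
Qed.

Variable n : nat.

Definition extM : 'M[F]_(n, n.+1) :=
  \matrix_(i, j) (if j == ord_max then -1 else (widen_ord (leqnSn n) i == j)%:R).

Definition ext (u : 'rV[F]_n) : 'rV[F]_n.+1 := u *m extM.

Lemma sum_delta (u : 'rV[F]_n) (i : 'I_n) :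
  \sum_k u 0 k * (widen_ord (leqnSn n) k == widen_ord (leqnSn n) i)%:R = u 0 i.
Proof.
rewrite (bigD1 i) //= eqxx mulr1 big1 ?addr0 // => k /negbTE ki.
have -> : (widen_ord (leqnSn n) k == widen_ord (leqnSn n) i) = false.
  by apply/negbTE; apply: contraFN ki => /eqP [] h; apply/eqP/val_inj.
by rewrite mulr0.
Qed.

Lemma widen_neq (i : 'I_n) : (widen_ord (leqnSn n) i == ord_max) = false.
Proof. by apply/negbTE; rewrite -val_eqE /= neq_ltn ltn_ord. Qed.

Lemma punct_ext u : punct (ext u) = u.
Proof.
apply/rowP => i; rewrite !mxE.
under eq_bigr do rewrite mxE widen_neq.
exact: sum_delta.
Qed.

Lemma coordsum_split (v : 'rV[F]_n.+1) :
  coordsum v = coordsum (punct v) + v 0 ord_max.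
Proof.
rewrite /coordsum big_ord_recr /=; congr (_ + _).
by apply: eq_bigr => i _; rewrite mxE.
Qed.

Lemma ext_max u : ext u 0 ord_max = - coordsum u.
Proof.
rewrite !mxE /coordsum -sumrN; apply: eq_bigr => i _.
by rewrite mxE eqxx mulrN1.
Qed.

Lemma coordsum_ext u : coordsum (ext u) = 0.
Proof. by rewrite coordsum_split punct_ext ext_max subrr. Qed.

Lemma ext_punct (v : 'rV[F]_n.+1) : coordsum v = 0 -> ext (punct v) = v.
Proof.
move=> cs; apply/rowP => j.
case: (eqVneq j ord_max) => [->|jn].
  rewrite ext_max; move: cs; rewrite coordsum_split => /eqP.
  by rewrite addrC addr_eq0 => /eqP ->.
have jlt : (j < n)%N.
  rewrite ltn_neqAle -ltnS ltn_ord andbT; apply: contra jn => /eqP h.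
  by apply/eqP/val_inj.
have -> : j = widen_ord (leqnSn n) (Ordinal jlt) by apply/val_inj.
rewrite [LHS]mxE; under eq_bigr do rewrite [extM _ _]mxE widen_neq.
rewrite (sum_delta (punct v)) mxE //.
Qed.

Lemma ext_inj : injective ext.
Proof. by move=> u w h; rewrite -(punct_ext u) h punct_ext. Qed.

Definition extf : 'Hom('rV[F]_n, 'rV[F]_n.+1) := linfun (mulmxr extM).

Lemma extfE u : extf u = ext u.
Proof. by rewrite lfunE. Qed.

Lemma mem_extend (C : {vspace 'rV[F]_n}) v :
  (v \in extend C) = (punct v \in C) && (coordsum v == 0).
Proof.
have -> : extend C = (extf @: C)%VS.
  apply/eqP; rewrite eqEsubv; apply/andP; split.
    apply/span_subvP => w; rewrite mem_filter => /andP [/andP [pw /eqP cw] _].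
    by rewrite -(ext_punct cw) -extfE memv_img.
  apply/subvP => w /memv_imgP [u uC ->]; rewrite extfE; apply: memv_span.
  by rewrite mem_filter punct_ext uC coordsum_ext eqxx mem_enum inE.
apply/memv_imgP/andP => [[u uC ->]|[pv /eqP cv]].
  by rewrite extfE punct_ext coordsum_ext.
by exists (punct v) => //; rewrite extfE ext_punct.
Qed.

Lemma dim_extend (C : {vspace 'rV[F]_n}) : \dim (extend C) = \dim C.
Proof.
have -> : extend C = (extf @: C)%VS.
  apply/vspaceP => v; rewrite mem_extend.
  apply/andP/memv_imgP => [[pv /eqP cv]|[u uC ->]].
    by exists (punct v) => //; rewrite extfE ext_punct.
  by rewrite extfE punct_ext coordsum_ext.
apply: limg_dim_eq.
have /lker0P/eqP -> : injective extf by move=> u w; rewrite !extfE => /ext_inj.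
by rewrite capv0.
Qed.

Lemma wt_split (v : 'rV[F]_n.+1) : wt v = (wt (punct v) + (v 0%R ord_max != 0%R))%N.
Proof.
have wE m (w : 'rV[F]_m) : wt w = (\sum_(i < m) (w 0%R i != 0%R))%N.
  rewrite /wt cardsE -sum1_card big_mkcond /=; apply: eq_bigr => i _.
  by rewrite unfold_in; case: (w 0 i != 0).
rewrite !wE big_ord_recr /=; congr (_ + _)%N.
by apply: eq_bigr => i _; rewrite mxE.
Qed.

End S.

Lemma minwt_mono (F : finFieldType) m (P Q : pred 'rV[F]_m) :
  (forall v, Q v -> P v) -> (minwt P <= minwt Q)%N.
Proof.
move=> H; apply: minwt_geq; last exact: minwt_le_def.
by move=> v /H; apply: minwt_leq.
Qed.

Theorem theorem8 (F : finFieldType) (n : nat) (C1 C2 : {vspace 'rV[F]_n}) :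
  (C2 <= C1)%VS -> (\dim C2 < \dim C1)%N ->
  ((mindist_even C1 <= mindist_odd C1)%N ->
     exists dz dx, [/\ css_aqecc F n.+1 (\dim C1 - \dim C2) dz dx,
                       (mindist C1 <= dz)%N
                     & (mindist (dual (extend C2)) <= dx)%N])
  /\
  ((mindist_odd C1 < mindist_even C1)%N ->
     exists dz dx, [/\ css_aqecc F n.+1 (\dim C1 - \dim C2) dz dx,
                       (mindist C1 + 1 <= dz)%N
                     & (mindist (dual (extend C2)) <= dx)%N]).
Proof.
move=> sub dlt.
set D1 := extend C1; set D2 := extend C2.
have css : css_aqecc F n.+1 (\dim C1 - \dim C2) (wt_diff D1 D2)
                     (wt_diff (dual D2) (dual D1)).
  exists D1, D2; split; rewrite ?dim_extend //.
  apply/subvP => v; rewrite !mem_extend => /andP [p ->].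
  by rewrite (subvP sub _ p).
have hdx : (mindist (dual D2) <= wt_diff (dual D2) (dual D1))%N.
  apply: minwt_mono => v /andP [vD2 vD1]; rewrite vD2 /=.
  by apply: contraNneq vD1 => ->; exact: mem0v.
have hkey : forall v, v \in D1 -> v \notin D2 ->
    exists u, [/\ u \in C1, u != 0 & wt v = (wt u + (coordsum u != 0%R))%N].
  move=> v; rewrite /D1 mem_extend => /andP [uC /eqP cv] vD2.
  exists (punct v); split => //.
    apply: contraNneq vD2 => u0; rewrite -(ext_punct cv) u0 /ext mul0mx.
    exact: mem0v.
  rewrite wt_split; congr (_ + _)%N.
  move: cv; rewrite coordsum_split => /eqP; rewrite addrC addr_eq0 => /eqP ->.
  by rewrite oppr_eq0.
have dle : (mindist C1 <= n.+1)%N by apply: minwt_le_def.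
have dodd : (mindist C1 <= mindist_odd C1)%N.
  apply: minwt_mono => v /andP [-> c]; rewrite andTb.
  by apply: contraNneq c => ->; rewrite /coordsum big1 // => i _; rewrite mxE.
split=> [_|hlt].
  exists (wt_diff D1 D2), (wt_diff (dual D2) (dual D1)); split => //.
  apply: minwt_geq; last by apply: leq_trans dle _.
  move=> v /andP [v1 v2]; have [u [uC u0 ->]] := hkey v v1 v2.
  apply: leq_trans (leq_addr _ _); apply: minwt_leq; by rewrite uC.
exists (wt_diff D1 D2), (wt_diff (dual D2) (dual D1)); split => //.
apply: minwt_geq; last by rewrite addn1.
move=> v /andP [v1 v2]; have [u [uC u0 ->]] := hkey v v1 v2.
case: (eqVneq (coordsum u) 0) => cu /=.
  rewrite addn0 addn1; apply: leq_ltn_trans dodd _; apply: leq_trans hlt _.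
  by apply: minwt_leq; rewrite uC u0 cu eqxx.
by rewrite leq_add2r; apply: minwt_leq; rewrite uC.
Qed.
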